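(* Let $n,m\ge1$, $c_1,\dots,c_n>0$, $T>0$, $\epsilon>0$, $\kappa_{ij}\ge0$, $\bar r_1,\dots,\bar r_m>0$, $R=\prod_i[0,\bar r_i]$. For each $i$ let $p_i:\mathbb{R}\to[0,1]$ be continuous and nonincreasing, with $p_i(\tau)=1$ for $\tau\le0$ and $p_i(\tau)\to0$ as $\tau\to\infty$, and let $U_i:[0,\bar r_i]\to\mathbb{R}$ be continuous, nondecreasing and strictly concave, such that for every $\tau\in\mathbb{R}$, $\bar r_ip_i(\tau)$ is the maximizer of $U_i(r)-\tau r$ over $r\in[0,\bar r_i]$. Define $\mu_j(q_j)=0$ for $q_j\le c_j$, $\mu_j(q_j)=T(1-c_j/q_j)$ for $q_j>c_j$; $\delta_{ij}(\mu)=e^{-(\kappa_{ij}+\mu_j)/\epsilon}/\sum_ke^{-(\kappa_{ik}+\mu_k)/\epsilon}$; $\varphi^i_\epsilon(\mu)=-\epsilon\log\sum_je^{-(\kappa_{ij}+\mu_j)/\epsilon}$; and $$W(r,\mu)=\sum_i[r_i\varphi^i_\epsilon(\mu)-U_i(r_i)]+\sum_jc_j\log(1-\mu_j/T)\quad\text{on } R\times[0,T)^n.$$ Consider the elastic dynamics $$\dot q_j=\sum_ix_{ij}-\frac{q_j}{T},\quad \mu_j=\mu_j(q_j),\quad x_{ij}=r_i\delta_{ij}(\mu),\quad r_i=\bar r_ip_i(\varphi^i_\epsilon(\mu)),$$ and call $(X^*,q^*,\mu^*,r^* )$ an equilibrium point if $\mu^*_j=\mu_j(q^*_j)$, $r^*_i=\bar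 r_ip_i(\varphi^i_\epsilon(\mu^* ))$, $x^*_{ij}=r^*_i\delta_{ij}(\mu^* )$ and $\sum_ix^*_{ij}=q^*_j/T$ for all $i,j$. Then the following are equivalent: (i) $(r^*,\mu^* )$ is the saddle point of $W$ (i.e. $W(r^*,\mu)\le W(r^*,\mu^* )\le W(r,\mu^* )$ for all $r\in R$, $\mu\in[0,T)^n$), and $(X^*,q^* )$ is the solution of the problem of minimizing $\sum_{i,j}\kappa_{ij}x_{ij}+\sum_j\beta_j(q_j)+\epsilon\sum_{i,j}x_{ij}\log(x_{ij}/r^*_i)$ subject to $x_{ij}\ge0$, $\sum_jx_{ij}=r^*_i$, $\sum_ix_{ij}=q_j/T$, where $\beta_j(q)=0$ for $q\le c_j$ and $\beta_j(q)=q-c_j-c_j\log(q/c_j)$ for $q>c_j$; (ii) $(X^*,q^*,\mu^*,r^* )$ is an equilibrium point of the elastic dynamics. In particular, the elastic dynamics have a unique equilibrium point.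
   Context: Convention $0\log0=0$ (terms with $x_{ij}=0$ contribute zero). $p_i(\tau)$ is the probability that a customer from location $i$ is willing to wait longer than $\tau$, $\bar r_i$ the maximal request rate, and $U_i$ the associated utility, whose inverse derivative gives the demand curve $\bar r_ip_i$; strict concavity of $U_i$ is the paper's Assumption 1. *)

(* Defs.v *)
From HB Require Import structures.
From mathcomp Require Import all_boot all_order all_algebra.
From mathcomp Require Import all_classical all_reals all_analysis.
Set Implicit Arguments. Unset Strict Implicit. Unset Printing Implicit Defensive.
Import Order.TTheory GRing.Theory Num.Theory numFieldNormedType.Exports.
Local Open Scope ring_scope.

Section ElasticDefs.
Variable R : realType.
Variables m n : nat.
(* i : 'I_m ranges over customer locations, j : 'I_n over stations. *)

Definition mu_of (T c q : R) : R := if q <= c then 0 else T * (1 - c / q).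

Definition beta (c q : R) : R := if q <= c then 0 else q - c - c * ln (q / c).

Definition expo (kappa : 'I_m -> 'I_n -> R) (eps : R) (mu : 'I_n -> R)
  (i : 'I_m) (j : 'I_n) : R := expR (- (kappa i j + mu j) / eps).

Definition delta (kappa : 'I_m -> 'I_n -> R) (eps : R) (mu : 'I_n -> R)
  (i : 'I_m) (j : 'I_n) : R :=
  expo kappa eps mu i j / \sum_(k < n) expo kappa eps mu i k.

Definition phi (kappa : 'I_m -> 'I_n -> R) (eps : R) (mu : 'I_n -> R)
  (i : 'I_m) : R := - eps * ln (\sum_(j < n) expo kappa eps mu i j).

Definition W (U : 'I_m -> R -> R) (c : 'I_n -> R) (T : R)
  (kappa : 'I_m -> 'I_n -> R) (eps : R) (r : 'I_m -> R) (mu : 'I_n -> R) : R :=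
  \sum_(i < m) (r i * phi kappa eps mu i - U i (r i))
  + \sum_(j < n) c j * ln (1 - mu j / T).

Definition xlog (x y : R) : R := if x == 0 then 0 else x * ln (x / y).

Definition in_Rbox (rbar : 'I_m -> R) (r : 'I_m -> R) : Prop :=
  forall i, 0 <= r i <= rbar i.

Definition in_Mbox (T : R) (mu : 'I_n -> R) : Prop := forall j, 0 <= mu j < T.

Definition saddle (U : 'I_m -> R -> R) (c : 'I_n -> R) (T : R)
  (kappa : 'I_m -> 'I_n -> R) (eps : R) (rbar : 'I_m -> R)
  (rs : 'I_m -> R) (mus : 'I_n -> R) : Prop :=
  in_Rbox rbar rs /\ in_Mbox T mus /\
  (forall mu, in_Mbox T mu -> W U c T kappa eps rs mu <= W U c T kappa eps rs mus) /\
  (forall r, in_Rbox rbar r -> W U c T kappa eps rs mus <= W U c T kappa eps r mus).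

Definition feasible (T : R) (rs : 'I_m -> R)
  (X : 'I_m -> 'I_n -> R) (q : 'I_n -> R) : Prop :=
  (forall i j, 0 <= X i j) /\
  (forall i, \sum_(j < n) X i j = rs i) /\
  (forall j, \sum_(i < m) X i j = q j / T).

Definition objective (kappa : 'I_m -> 'I_n -> R) (c : 'I_n -> R) (eps : R)
  (rs : 'I_m -> R) (X : 'I_m -> 'I_n -> R) (q : 'I_n -> R) : R :=
  \sum_(i < m) \sum_(j < n) kappa i j * X i j
  + \sum_(j < n) beta (c j) (q j)
  + eps * \sum_(i < m) \sum_(j < n) xlog (X i j) (rs i).

Definition solves_transport (kappa : 'I_m -> 'I_n -> R) (c : 'I_n -> R)
  (T eps : R) (rs : 'I_m -> R) (X : 'I_m -> 'I_n -> R) (q : 'I_n -> R) : Prop :=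
  feasible T rs X q /\
  forall X' q', feasible T rs X' q' ->
    objective kappa c eps rs X q <= objective kappa c eps rs X' q'.

Definition equilibrium (p : 'I_m -> R -> R) (c : 'I_n -> R) (T eps : R)
  (kappa : 'I_m -> 'I_n -> R) (rbar : 'I_m -> R)
  (X : 'I_m -> 'I_n -> R) (q mu : 'I_n -> R) (r : 'I_m -> R) : Prop :=
  (forall j, mu j = mu_of T (c j) (q j)) /\
  (forall i, r i = rbar i * p i (phi kappa eps mu i)) /\
  (forall i j, X i j = r i * delta kappa eps mu i j) /\
  (forall j, \sum_(i < m) X i j = q j / T).

End ElasticDefs.

(* Main.v *)
Require Import Defs.
From HB Require Import structures.
From mathcomp Require Import all_boot all_order all_algebra.
From mathcomp Require Import all_classical all_reals all_analysis.
From mathcomp Require Import ring lra.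
Set Implicit Arguments. Unset Strict Implicit. Unset Printing Implicit Defensive.
Import Order.TTheory GRing.Theory Num.Theory numFieldNormedType.Exports.
Local Open Scope ring_scope.
Local Open Scope classical_set_scope.

Lemma ln_le_sub1 (R : realType) (x : R) : 0 < x -> ln x <= x - 1.
Proof.
move=> x0; have := expR_ge1Dx (ln x); rewrite lnK ?posrE //; lra.
Qed.

Lemma ln_lt_sub1 (R : realType) (x : R) : 0 < x -> x != 1 -> ln x < x - 1.
Proof.
move=> x0 x1; have lx : ln x != 0.
  apply: contra x1 => /eqP lx0; apply/eqP.
  by rewrite -(lnK (x:=x)) ?posrE // lx0 expR0.
have := expR_gt1Dx lx; rewrite lnK ?posrE //; lra.
Qed.

Lemma ln_tangent (R : realType) (y z : R) : 0 < y -> 0 < z ->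
  ln y <= ln z + (y - z) / z.
Proof.
move=> y0 z0.
have -> : ln y = ln z + ln (y / z) by rewrite ln_div ?posrE //; ring.
rewrite lerD2l; have := ln_le_sub1 (divr_gt0 y0 z0).
have -> : y / z - 1 = (y - z) / z by field; rewrite gt_eqF.
by [].
Qed.

Lemma ln_tangent_lt (R : realType) (y z : R) : 0 < y -> 0 < z -> y != z ->
  ln y < ln z + (y - z) / z.
Proof.
move=> y0 z0 yz.
have -> : ln y = ln z + ln (y / z) by rewrite ln_div ?posrE //; ring.
rewrite ltrD2l; have := @ln_lt_sub1 _ (y / z) (divr_gt0 y0 z0).
have -> : y / z - 1 = (y - z) / z by field; rewrite gt_eqF.
apply; apply: contra yz => /eqP h; apply/eqP.
by have := h; move/(congr1 (fun t => t * z)); rewrite mulfVK ?gt_eqF // mul1r.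
Qed.

Lemma sum_pos (R : realType) (k : nat) (F : 'I_k -> R) :
  (0 < k)%N -> (forall j, 0 < F j) -> 0 < \sum_(j < k) F j.
Proof.
case: k F => // k F _ H; rewrite big_ord_recl.
have h1 := H ord0.
have h2 : 0 <= \sum_(i < k) F (lift ord0 i) by apply: sumr_ge0 => j _; apply: ltW.
lra.
Qed.

Lemma sum_le_lt (R : realType) (k : nat) (F G : 'I_k -> R) (j0 : 'I_k) :
  (forall j, F j <= G j) -> F j0 < G j0 -> \sum_(j < k) F j < \sum_(j < k) G j.
Proof.
move=> H H0; rewrite (bigD1 j0) //= [X in _ < X](bigD1 j0) //=.
by apply: ltr_leD => //; apply: ler_sum => j _; exact: H.
Qed.

Lemma jensen_exp (R : realType) (k : nat) (w a : 'I_k -> R) :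
  (forall j, 0 <= w j) -> \sum_(j < k) w j = 1 ->
  expR (\sum_(j < k) w j * a j) <= \sum_(j < k) w j * expR (a j).
Proof.
move=> w0 w1; set A := \sum_(j < k) w j * a j.
have H : forall j, w j * (expR A * (1 + a j - A)) <= w j * expR (a j).
  move=> j; apply: ler_wpM2l => //.
  have -> : expR (a j) = expR A * expR (a j - A) by rewrite -expRD; congr expR; ring.
  apply: ler_wpM2l; first exact: ltW (expR_gt0 _).
  by rewrite -addrA; exact: expR_ge1Dx.
apply: le_trans (ler_sum _ (fun j _ => H j)).
have -> : \sum_(j < k) w j * (expR A * (1 + a j - A)) =
   expR A * (\sum_(j < k) w j + \sum_(j < k) w j * a j - A * \sum_(j < k) w j).
  rewrite (eq_bigr (fun j => expR A * w j + expR A * (w j * a j) - (expR A * A) * w j)); last by move=> j _; ring.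
  rewrite sumrB big_split /= -!big_distrr /=; ring.
rewrite w1 -/A.
have -> : 1 + A - A * 1 = 1 by ring.
by rewrite mulr1.
Qed.
Definition Zs (R : realType) (m n : nat) (kappa : 'I_m -> 'I_n -> R) (eps : R)
  (mu : 'I_n -> R) (i : 'I_m) : R := \sum_(k < n) expo kappa eps mu i k.

Lemma expo_gt0 (R : realType) (m n : nat) (kappa : 'I_m -> 'I_n -> R) eps mu i j :
  0 < expo kappa eps mu i j.
Proof. exact: expR_gt0. Qed.

Lemma Zs_gt0 (R : realType) (m n : nat) (kappa : 'I_m -> 'I_n -> R) eps mu i :
  (0 < n)%N -> 0 < Zs kappa eps mu i.
Proof. by move=> hn; apply: sum_pos => // j; exact: expo_gt0. Qed.

Lemma delta_gt0 (R : realType) (m n : nat) (kappa : 'I_m -> 'I_n -> R) eps mu i j :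
  (0 < n)%N -> 0 < delta kappa eps mu i j.
Proof. by move=> hn; apply: divr_gt0; [exact: expo_gt0| exact: Zs_gt0]. Qed.

Lemma sum_delta (R : realType) (m n : nat) (kappa : 'I_m -> 'I_n -> R) eps mu i :
  (0 < n)%N -> \sum_(j < n) delta kappa eps mu i j = 1.
Proof.
move=> hn; rewrite /delta -big_distrl /= -/(Zs kappa eps mu i).
by rewrite divff // gt_eqF // Zs_gt0.
Qed.

Lemma phi_tangent (R : realType) (m n : nat) (kappa : 'I_m -> 'I_n -> R) eps mu nu i :
  (0 < n)%N -> 0 < eps ->
  phi kappa eps mu i <= phi kappa eps nu i + \sum_(j < n) delta kappa eps nu i j * (mu j - nu j).
Proof.
move=> hn he.
set a := fun j => - (mu j - nu j) / eps.
have HZ : Zs kappa eps mu i = Zs kappa eps nu i * \sum_(j < n) delta kappa eps nu i j * expR (a j).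
  rewrite big_distrr /=; apply: eq_bigr => j _.
  rewrite /delta /expo /a mulrA mulrCA divff ?gt_eqF ?Zs_gt0 // mulr1 -expRD.
  congr expR; rewrite -mulrDl; congr (_ / _); ring.
have HJ := jensen_exp a (fun j => ltW (delta_gt0 kappa eps nu i j hn)) (sum_delta kappa eps nu i hn).
have HL : ln (Zs kappa eps nu i) + \sum_(j < n) delta kappa eps nu i j * a j <= ln (Zs kappa eps mu i).
  rewrite HZ lnM ?posrE ?Zs_gt0 //; last first.
    by apply: sum_pos => // j; apply: mulr_gt0; [exact: delta_gt0|exact: expR_gt0].
  rewrite lerD2l -(expRK (\sum_(j < n) delta kappa eps nu i j * a j)).
  rewrite ler_ln ?posrE ?expR_gt0 //.
  by apply: sum_pos => // j; apply: mulr_gt0; [exact: delta_gt0|exact: expR_gt0].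
rewrite /phi -/(Zs kappa eps mu i) -/(Zs kappa eps nu i).
have -> : \sum_(j < n) delta kappa eps nu i j * (mu j - nu j) =
   - eps * \sum_(j < n) delta kappa eps nu i j * a j.
  rewrite big_distrr /=; apply: eq_bigr => j _; rewrite /a; field.
  exact: lt0r_neq0.
have := ler_wpM2l (ltW he) HL; lra.
Qed.

Definition svec (R : realType) (m n : nat) (kappa : 'I_m -> 'I_n -> R) (eps : R)
  (r : 'I_m -> R) (mu : 'I_n -> R) (j : 'I_n) : R :=
  \sum_(i < m) r i * delta kappa eps mu i j.

Definition compl (R : realType) (m n : nat) (c : 'I_n -> R) (T : R)
  (kappa : 'I_m -> 'I_n -> R) (eps : R) (r : 'I_m -> R) (mu : 'I_n -> R) : Prop :=
  in_Mbox T mu /\ forall j, svec kappa eps r mu j <= c j / (T - mu j) /\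
     (0 < mu j -> svec kappa eps r mu j = c j / (T - mu j)).

Lemma one_subdiv (R : realType) (T x : R) : 0 < T -> 1 - x / T = (T - x) / T.
Proof. by move=> T0; field; rewrite gt_eqF. Qed.

Lemma one_subdiv_gt0 (R : realType) (T x : R) : 0 < T -> x < T -> 0 < 1 - x / T.
Proof. by move=> T0 xT; rewrite one_subdiv // divr_gt0 // subr_gt0. Qed.

Lemma lnterm_eq (R : realType) (T mu nu : R) : 0 < T -> nu < T ->
  ((1 - mu / T) - (1 - nu / T)) / (1 - nu / T) = - (mu - nu) / (T - nu).
Proof.
move=> T0 nuT; have h1 : T - nu != 0 by rewrite subr_eq0 gt_eqF.
by rewrite !one_subdiv //; field; rewrite h1 gt_eqF.
Qed.

Lemma lnterm_le (R : realType) (c T mu nu : R) : 0 < c -> 0 < T -> mu < T -> nu < T ->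
  c * ln (1 - mu / T) <= c * ln (1 - nu / T) - c * (mu - nu) / (T - nu).
Proof.
move=> c0 T0 muT nuT.
have := ln_tangent (one_subdiv_gt0 T0 muT) (one_subdiv_gt0 T0 nuT).
rewrite lnterm_eq // => h.
have := ler_wpM2l (ltW c0) h; rewrite mulrDr.
by rewrite !mulrA mulrN mulNr.
Qed.

Lemma lnterm_lt (R : realType) (c T mu nu : R) : 0 < c -> 0 < T -> mu < T -> nu < T ->
  mu != nu ->
  c * ln (1 - mu / T) < c * ln (1 - nu / T) - c * (mu - nu) / (T - nu).
Proof.
move=> c0 T0 muT nuT mn.
have yz : 1 - mu / T != 1 - nu / T.
  rewrite !one_subdiv //; apply: contra mn => /eqP h; apply/eqP.
  have : (T - mu) / T * T = (T - nu) / T * T by rewrite h.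
  rewrite !mulfVK ?gt_eqF //; lra.
have := ln_tangent_lt (one_subdiv_gt0 T0 muT) (one_subdiv_gt0 T0 nuT) yz.
rewrite lnterm_eq // => h.
have := ltr_pM2l c0; move=> /(_ _ _) e; rewrite -e in h.
move: h; rewrite mulrDr.
by rewrite !mulrA mulrN mulNr.
Qed.

Lemma W_diff (R : realType) (m n : nat) (U : 'I_m -> R -> R) (c : 'I_n -> R) (T : R)
  (kappa : 'I_m -> 'I_n -> R) (eps : R) (r : 'I_m -> R) (mu nu : 'I_n -> R) :
  W U c T kappa eps r nu + \sum_(j < n) (mu j - nu j) * (svec kappa eps r nu j - c j / (T - nu j))
  - W U c T kappa eps r mu =
  \sum_(i < m) r i * (phi kappa eps nu i + \sum_(j < n) delta kappa eps nu i j * (mu j - nu j) - phi kappa eps mu i)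
  + \sum_(j < n) (c j * ln (1 - nu j / T) - c j * (mu j - nu j) / (T - nu j) - c j * ln (1 - mu j / T)).
Proof.
have E1 : \sum_(j < n) (mu j - nu j) * (svec kappa eps r nu j - c j / (T - nu j)) =
  \sum_(i < m) r i * \sum_(j < n) delta kappa eps nu i j * (mu j - nu j)
  - \sum_(j < n) c j * (mu j - nu j) / (T - nu j).
  rewrite (eq_bigr (fun j => (mu j - nu j) * svec kappa eps r nu j - c j * (mu j - nu j) / (T - nu j)));
    last by move=> j _; rewrite mulrBr; congr (_ - _); rewrite mulrA [_ * c j]mulrC.
  rewrite sumrB; congr (_ - _).
  rewrite /svec (eq_bigr (fun j => \sum_(i < m) r i * (delta kappa eps nu i j * (mu j - nu j))));
    last by move=> j _; rewrite big_distrr /=; apply: eq_bigr => i _; ring.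
  rewrite exchange_big /=; apply: eq_bigr => i _; by rewrite big_distrr.
rewrite E1 /W.
have E2 : \sum_(i < m) r i * (phi kappa eps nu i + \sum_(j < n) delta kappa eps nu i j * (mu j - nu j) - phi kappa eps mu i)
  = \sum_(i < m) r i * phi kappa eps nu i + \sum_(i < m) r i * \sum_(j < n) delta kappa eps nu i j * (mu j - nu j) - \sum_(i < m) r i * phi kappa eps mu i.
  rewrite -big_split -sumrB /=; apply: eq_bigr => i _; ring.
have E3 : \sum_(j < n) (c j * ln (1 - nu j / T) - c j * (mu j - nu j) / (T - nu j) - c j * ln (1 - mu j / T))
  = \sum_(j < n) c j * ln (1 - nu j / T) - \sum_(j < n) c j * (mu j - nu j) / (T - nu j) - \sum_(j < n) c j * ln (1 - mu j / T).
  by rewrite -!sumrB.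
rewrite E2 E3 !sumrB; ring.
Qed.

Lemma W_tangent (R : realType) (m n : nat) (U : 'I_m -> R -> R) (c : 'I_n -> R) (T : R)
  (kappa : 'I_m -> 'I_n -> R) (eps : R) (r : 'I_m -> R) (mu nu : 'I_n -> R) :
  (0 < n)%N -> 0 < eps -> 0 < T -> (forall j, 0 < c j) -> (forall i, 0 <= r i) ->
  in_Mbox T mu -> in_Mbox T nu ->
  W U c T kappa eps r mu <= W U c T kappa eps r nu + \sum_(j < n) (mu j - nu j) * (svec kappa eps r nu j - c j / (T - nu j)).
Proof.
move=> hn he hT hc hr hmu hnu; rewrite -subr_ge0 W_diff.
apply: addr_ge0.
  apply: sumr_ge0 => i _; apply: mulr_ge0 => //.
  by rewrite subr_ge0; exact: phi_tangent.
apply: sumr_ge0 => j _.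
have := lnterm_le (hc j) hT (proj2 (andP (hmu j))) (proj2 (andP (hnu j))); lra.
Qed.

Lemma W_tangent_lt (R : realType) (m n : nat) (U : 'I_m -> R -> R) (c : 'I_n -> R) (T : R)
  (kappa : 'I_m -> 'I_n -> R) (eps : R) (r : 'I_m -> R) (mu nu : 'I_n -> R) (j0 : 'I_n) :
  (0 < n)%N -> 0 < eps -> 0 < T -> (forall j, 0 < c j) -> (forall i, 0 <= r i) ->
  in_Mbox T mu -> in_Mbox T nu -> mu j0 != nu j0 ->
  W U c T kappa eps r mu < W U c T kappa eps r nu + \sum_(j < n) (mu j - nu j) * (svec kappa eps r nu j - c j / (T - nu j)).
Proof.
move=> hn he hT hc hr hmu hnu hj0; rewrite -subr_gt0 W_diff.
apply: ltr_wpDl.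
  apply: sumr_ge0 => i _; apply: mulr_ge0 => //.
  by rewrite subr_ge0; exact: phi_tangent.
apply: (le_lt_trans _ (@sum_le_lt R n (fun _ => 0) _ j0 _ _)); first by rewrite big1_eq.
  move=> j /=.
  have := lnterm_le (hc j) hT (proj2 (andP (hmu j))) (proj2 (andP (hnu j))); lra.
have := lnterm_lt (hc j0) hT (proj2 (andP (hmu j0))) (proj2 (andP (hnu j0))) hj0; lra.
Qed.

Lemma compl_max (R : realType) (m n : nat) (U : 'I_m -> R -> R) (c : 'I_n -> R) (T : R)
  (kappa : 'I_m -> 'I_n -> R) (eps : R) (r : 'I_m -> R) (mu nu : 'I_n -> R) :
  (0 < n)%N -> 0 < eps -> 0 < T -> (forall j, 0 < c j) -> (forall i, 0 <= r i) ->
  compl c T kappa eps r nu -> in_Mbox T mu ->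
  W U c T kappa eps r mu <= W U c T kappa eps r nu /\
  (forall j0, mu j0 != nu j0 -> W U c T kappa eps r mu < W U c T kappa eps r nu).
Proof.
move=> hn he hT hc hr [hnu hcp] hmu.
have HS : \sum_(j < n) (mu j - nu j) * (svec kappa eps r nu j - c j / (T - nu j)) <= 0.
  apply: sumr_le0 => j _.
  have [h1 h2] := hcp j.
  have := hnu j => /andP [nu0 _]; have := hmu j => /andP [mu0 _].
  case: (ltrP 0 (nu j)) => hnj.
    by rewrite (h2 hnj) subrr mulr0.
  have nuj0 : nu j = 0 by apply/eqP; rewrite eq_le hnj nu0.
  apply: mulr_ge0_le0; first by rewrite nuj0 subr0.
  by rewrite subr_le0.
split.
  have := @W_tangent R m n U c T kappa eps r mu nu hn he hT hc hr hmu hnu; lra.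
move=> j0 hj0.
have := @W_tangent_lt R m n U c T kappa eps r mu nu j0 hn he hT hc hr hmu hnu hj0; lra.
Qed.

Definition rho (R : realType) (m n : nat) (p : 'I_m -> R -> R) (rbar : 'I_m -> R)
  (kappa : 'I_m -> 'I_n -> R) (eps : R) (mu : 'I_n -> R) : 'I_m -> R :=
  fun i => rbar i * p i (phi kappa eps mu i).

Lemma W_rdiff (R : realType) (m n : nat) (U : 'I_m -> R -> R) (c : 'I_n -> R) (T : R)
  (kappa : 'I_m -> 'I_n -> R) (eps : R) (r r' : 'I_m -> R) (mu : 'I_n -> R) :
  W U c T kappa eps r mu - W U c T kappa eps r' mu =
  \sum_(i < m) ((r i * phi kappa eps mu i - U i (r i)) - (r' i * phi kappa eps mu i - U i (r' i))).
Proof. by rewrite [RHS]sumrB /W; ring. Qed.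

Lemma rmin (R : realType) (m n : nat) (U : 'I_m -> R -> R) (c : 'I_n -> R) (T : R)
  (kappa : 'I_m -> 'I_n -> R) (eps : R) (rbar : 'I_m -> R) (p : 'I_m -> R -> R)
  (r : 'I_m -> R) (mu : 'I_n -> R) :
  (forall i tau r, 0 <= r <= rbar i ->
     U i r - tau * r <= U i (rbar i * p i tau) - tau * (rbar i * p i tau)) ->
  in_Rbox rbar r ->
  W U c T kappa eps (rho p rbar kappa eps mu) mu <= W U c T kappa eps r mu.
Proof.
move=> hUmax hr; rewrite -subr_ge0 W_rdiff; apply: sumr_ge0 => i _.
have := hUmax i (phi kappa eps mu i) (r i) (hr i); rewrite /rho; lra.
Qed.

Lemma r_unique (R : realType) (m n : nat) (U : 'I_m -> R -> R) (c : 'I_n -> R) (T : R)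
  (kappa : 'I_m -> 'I_n -> R) (eps : R) (rbar : 'I_m -> R) (p : 'I_m -> R -> R)
  (r : 'I_m -> R) (mu : 'I_n -> R) :
  (forall i x, 0 <= p i x <= 1) -> (forall i, 0 < rbar i) ->
  (forall i x y t, 0 <= x <= rbar i -> 0 <= y <= rbar i -> x != y ->
     0 < t < 1 -> t * U i x + (1 - t) * U i y < U i (t * x + (1 - t) * y)) ->
  (forall i tau r, 0 <= r <= rbar i ->
     U i r - tau * r <= U i (rbar i * p i tau) - tau * (rbar i * p i tau)) ->
  in_Rbox rbar r ->
  W U c T kappa eps r mu <= W U c T kappa eps (rho p rbar kappa eps mu) mu ->
  r = rho p rbar kappa eps mu.
Proof.
move=> hp01 hrbar hUconc hUmax hr hW.
have H0 : W U c T kappa eps r mu - W U c T kappa eps (rho p rbar kappa eps mu) mu = 0.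
  by apply/eqP; rewrite eq_le subr_le0 hW /= subr_ge0 rmin.
rewrite W_rdiff in H0.
have di : forall i, 0 <= (r i * phi kappa eps mu i - U i (r i)) -
    (rho p rbar kappa eps mu i * phi kappa eps mu i - U i (rho p rbar kappa eps mu i)).
  move=> k; have := hUmax k (phi kappa eps mu k) (r k) (hr k); rewrite /rho; lra.
have Hi := psumr_eq0P (fun k _ => di k) H0.
apply: funext => i.
set tau := phi kappa eps mu i.
have e := Hi i isT; rewrite -/tau in e.
have hrho : 0 <= rho p rbar kappa eps mu i <= rbar i.
  rewrite /rho; have := hp01 i tau; have := hrbar i => h /andP [a b].
  apply/andP; split; first by apply: mulr_ge0 => //; exact: ltW.
  by rewrite -[X in _ <= X]mulr1 ler_wpM2l // ltW.
apply/eqP; apply: contraT => hne.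
have hc := hUconc i (r i) (rho p rbar kappa eps mu i) (1/2) (hr i) hrho hne.
have hm : 0 <= 1/2 * r i + (1 - 1/2) * rho p rbar kappa eps mu i <= rbar i.
  case/andP: (hr i) => a b; case/andP: hrho => a' b'.
  apply/andP; split; lra.
have hmax := hUmax i tau _ hm.
have h12 : 0 < (1/2 : R) < 1 by apply/andP; split; lra.
have h := hc h12; rewrite /rho -/tau in e hmax h.
lra.
Qed.

Lemma compl_iff_muof (R : realType) (T c s mu : R) :
  0 < T -> 0 < c -> 0 <= s -> 0 <= mu < T ->
  (mu = mu_of T c (T * s)) <-> (s <= c / (T - mu) /\ (0 < mu -> s = c / (T - mu))).
Proof.
move=> T0 c0 s0 /andP [mu0 muT].
have d0 : 0 < T - mu by rewrite subr_gt0.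
rewrite /mu_of; case: ifP => hTs.
  split.
    move=> ->; rewrite subr0 ler_pdivlMr //; split; [lra| by rewrite ltxx].
  move=> [h1 h2]; case: (ltrP 0 mu) => hm; last by apply/eqP; rewrite eq_le hm mu0.
  have e := h2 hm.
  have : s * (T - mu) = c by rewrite e mulfVK // gt_eqF.
  move=> e2; exfalso.
  have : s * mu > 0.
    apply: mulr_gt0 => //; rewrite lt_neqAle s0 andbT; apply/eqP => s00.
    by move: e2; rewrite -s00 mul0r => c00; move: c0; rewrite -c00 ltxx.
  nra.
have hs : 0 < s.
  rewrite lt_neqAle s0 andbT; apply/eqP => s00; move: hTs; rewrite -s00 mulr0.
  by rewrite ltW.
have hTs' : c < T * s by rewrite ltNge hTs.
split.
  move=> ->.
  have -> : T - T * (1 - c / (T * s)) = c / s by field; rewrite !gt_eqF.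
  have -> : c / (c / s) = s by field; rewrite !gt_eqF.
  split => // _; apply: mulr_gt0 => //; rewrite subr_gt0 ltr_pdivrMr ?mulr_gt0 //.
move=> [h1 h2]; case: (ltrP 0 mu) => hm; last first.
  exfalso; have mu00 : mu = 0 by apply/eqP; rewrite eq_le hm mu0.
  move: h1; rewrite mu00 subr0 ler_pdivlMr //; lra.
have e := h2 hm.
rewrite e; field.
by rewrite !gt_eqF // ?mulr_gt0 // ?divr_gt0.
Qed.

Lemma muof_range (R : realType) (T c q : R) :
  0 < T -> 0 < c -> 0 <= mu_of T c q < T.
Proof.
move=> T0 c0; rewrite /mu_of; case: ifP => h; first by rewrite lexx T0.
have hq : c < q by rewrite ltNge h.
have q0 : 0 < q by apply: lt_trans hq.
have h1 : 0 < c / q < 1.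
  by rewrite divr_gt0 //= ltr_pdivrMr // mul1r.
case/andP: h1 => a b.
apply/andP; split; first by apply: mulr_ge0; [exact: ltW| lra].
rewrite -[X in _ < X]mulr1 ltr_pM2l //; lra.
Qed.

Lemma beta_conv (R : realType) (T c q q' : R) :
  0 < T -> 0 < c ->
  beta c q + (mu_of T c q / T) * (q' - q) <= beta c q'.
Proof.
move=> T0 c0; rewrite /beta /mu_of.
case: ifP => hq.
  rewrite mul0r mul0r addr0; case: ifP => hq' //.
  have hq'' : c < q' by rewrite ltNge hq'.
  have := ln_le_sub1 (divr_gt0 (lt_trans c0 hq'') c0).
  move=> h; have := ler_wpM2l (ltW c0) h.
  have -> : c * (q' / c - 1) = q' - c by field; rewrite gt_eqF.
  lra.
have hqc : c < q by rewrite ltNge hq.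
have q0 : 0 < q by apply: lt_trans hqc.
have -> : T * (1 - c / q) / T = 1 - c / q by field; rewrite !gt_eqF.
case: ifP => hq'.
  have h := ln_le_sub1 (divr_gt0 c0 q0).
  have e : ln (c / q) = - ln (q / c).
    by rewrite -lnV ?posrE ?divr_gt0 // invf_div.
  rewrite e in h.
  have h2 : (1 - c / q) * q' <= (1 - c / q) * c.
    by apply: ler_wpM2l => //; rewrite subr_ge0 ler_pdivrMr // mul1r ltW.
  have := ler_wpM2l (ltW c0) h.
  have -> : c * (c / q - 1) = c * c / q - c by field; rewrite gt_eqF.
  move=> h3.
  move: h2; have -> : (1 - c / q) * c = c - c * c / q by field; rewrite gt_eqF.
  move=> h2.
  have -> : (1 - c / q) * (q' - q) = (1 - c / q) * q' - q + c by field; rewrite gt_eqF.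
  lra.
have hq'' : c < q' by rewrite ltNge hq'.
have q'0 : 0 < q' by apply: lt_trans hq''.
have e : ln (q' / c) = ln (q / c) + ln (q' / q).
  by rewrite -lnM ?posrE ?divr_gt0 //; congr ln; field; rewrite !gt_eqF.
have h := ln_le_sub1 (divr_gt0 q'0 q0).
have := ler_wpM2l (ltW c0) h.
have -> : c * (q' / q - 1) = c * q' / q - c by field; rewrite gt_eqF.
move=> h3; rewrite e.
have -> : (1 - c / q) * (q' - q) = q' - q - c * q' / q + c by field; rewrite gt_eqF.
lra.
Qed.

Definition Dfun (R : realType) (x y : R) : R :=
  (if x == 0 then 0 else x * ln (x / y)) - x + y.

Lemma Dfun_ge0 (R : realType) (x y : R) : 0 <= x -> 0 <= y -> (y = 0 -> x = 0) ->
  0 <= Dfun x y /\ (Dfun x y = 0 -> x = y).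
Proof.
move=> x0 y0 hyx; rewrite /Dfun; case: eqP => [->|hx].
  by rewrite subr0 add0r; split => // ->.
have xp : 0 < x by rewrite lt_neqAle eq_sym x0 andbT; apply/eqP.
have yp : 0 < y.
  rewrite lt_neqAle y0 andbT eq_sym; apply/eqP => hy; exact: hx (hyx hy).
have e : ln (x / y) = - ln (y / x) by rewrite -lnV ?posrE ?divr_gt0 // invf_div.
rewrite e.
have h := ln_le_sub1 (divr_gt0 yp xp).
have h2 := ler_wpM2l (ltW xp) h.
have e2 : x * (y / x - 1) = y - x by field; rewrite gt_eqF.
rewrite e2 in h2.
split; first by lra.
move=> h3; apply/eqP; apply: contraT => hne.
have hne' : y / x != 1.
  apply: contra hne => /eqP h4; apply/eqP.
  by have := congr1 (fun t => t * x) h4; rewrite mulfVK ?gt_eqF // mul1r => ->.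
have h5 := ltr_pM2l xp; move: (ln_lt_sub1 (divr_gt0 yp xp) hne'); rewrite -h5 e2.
lra.
Qed.

Lemma ln_delta (R : realType) (m n : nat) (kappa : 'I_m -> 'I_n -> R) eps mu i j :
  (0 < n)%N ->
  ln (delta kappa eps mu i j) = - (kappa i j + mu j) / eps - ln (Zs kappa eps mu i).
Proof.
move=> hn; rewrite /delta ln_div ?posrE ?expo_gt0 ?Zs_gt0 //.
by rewrite /expo expRK.
Qed.

Lemma entry_ident (R : realType) (m n : nat) (kappa : 'I_m -> 'I_n -> R) eps mu i j (x r : R) :
  (0 < n)%N -> 0 < eps -> 0 <= x -> 0 <= r -> (x != 0 -> 0 < r) ->
  kappa i j * x + eps * xlog x r =
  eps * Dfun x (r * delta kappa eps mu i j) + eps * x - eps * (r * delta kappa eps mu i j)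
   - mu j * x - eps * x * ln (Zs kappa eps mu i).
Proof.
move=> hn he x0 r0 hxr; rewrite /xlog /Dfun; case: eqP => [->|hx].
  by rewrite !mulr0 !mul0r; ring.
have xp : 0 < x by rewrite lt_neqAle eq_sym x0 andbT; apply/eqP.
have rp := hxr (introN eqP hx).
have dp := delta_gt0 kappa eps mu i j hn.
have e : ln (x / r) = ln (x / (r * delta kappa eps mu i j)) + ln (delta kappa eps mu i j).
  have hd1 : x / (r * delta kappa eps mu i j) \in Num.pos by rewrite posrE divr_gt0 // mulr_gt0.
  have hd2 : delta kappa eps mu i j \in Num.pos by rewrite posrE.
  rewrite -(lnM hd1 hd2); apply: congr1; field.
  by rewrite !gt_eqF.
rewrite e ln_delta //.
by field; rewrite gt_eqF.
Qed.

Lemma sum_lin5 (R : realType) (n : nat) (a L : R) (D x y z : 'I_n -> R) :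
  \sum_(j < n) (a * D j + a * x j - a * y j - z j * x j - a * x j * L) =
  a * \sum_(j < n) D j + a * \sum_(j < n) x j - a * \sum_(j < n) y j
  - \sum_(j < n) z j * x j - a * (\sum_(j < n) x j) * L.
Proof.
rewrite !sumrB !big_split /= -!big_distrr /= -big_distrl /= -big_distrr /=.
by [].
Qed.

Lemma row_ident (R : realType) (m n : nat) (kappa : 'I_m -> 'I_n -> R) eps mu i
  (x : 'I_n -> R) (r : R) :
  (0 < n)%N -> 0 < eps -> (forall j, 0 <= x j) -> \sum_(j < n) x j = r ->
  \sum_(j < n) (kappa i j * x j + eps * xlog (x j) r) =
  eps * \sum_(j < n) Dfun (x j) (r * delta kappa eps mu i j)
  - \sum_(j < n) mu j * x j + r * phi kappa eps mu i.
Proof.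
move=> hn he x0 hs.
have r0 : 0 <= r by rewrite -hs; apply: sumr_ge0 => j _.
have hxr : forall j, x j != 0 -> 0 < r.
  move=> j hj; rewrite lt_neqAle r0 andbT eq_sym; apply/eqP => r00.
  have H0 : \sum_(k < n) x k = 0 by rewrite hs r00.
  have hx := @psumr_eq0P _ _ xpredT x (fun k _ => x0 k) H0 j isT.
  by move: hj; rewrite hx eqxx.
rewrite (eq_bigr (fun j => eps * Dfun (x j) (r * delta kappa eps mu i j) + eps * x j
   - eps * (r * delta kappa eps mu i j) - mu j * x j - eps * x j * ln (Zs kappa eps mu i))); last first.
  by move=> j _; apply: entry_ident => //; exact: hxr.
rewrite sum_lin5 hs.
have -> : \sum_(j < n) r * delta kappa eps mu i j = r by rewrite -big_distrr /= sum_delta // mulr1.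
rewrite /phi -/(Zs kappa eps mu i); ring.
Qed.

Lemma obj_ident (R : realType) (m n : nat) (kappa : 'I_m -> 'I_n -> R) (c : 'I_n -> R)
  (T eps : R) (mu : 'I_n -> R) (r : 'I_m -> R) (X : 'I_m -> 'I_n -> R) (q : 'I_n -> R) :
  (0 < n)%N -> 0 < eps -> feasible T r X q ->
  objective kappa c eps r X q =
  eps * \sum_(i < m) \sum_(j < n) Dfun (X i j) (r i * delta kappa eps mu i j)
  + \sum_(i < m) r i * phi kappa eps mu i
  + \sum_(j < n) (beta (c j) (q j) - mu j * (q j / T)).
Proof.
move=> hn he [hX [hrow hcol]].
have E1 : \sum_(i < m) \sum_(j < n) kappa i j * X i j
    + eps * \sum_(i < m) \sum_(j < n) xlog (X i j) (r i)
  = \sum_(i < m) \sum_(j < n) (kappa i j * X i j + eps * xlog (X i j) (r i)).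
  rewrite big_distrr -big_split /=; apply: eq_bigr => i _.
  by rewrite big_distrr -big_split.
have E2 : \sum_(i < m) \sum_(j < n) (kappa i j * X i j + eps * xlog (X i j) (r i))
  = \sum_(i < m) (eps * \sum_(j < n) Dfun (X i j) (r i * delta kappa eps mu i j)
     - \sum_(j < n) mu j * X i j + r i * phi kappa eps mu i).
  by apply: eq_bigr => i _; apply: row_ident.
have E3 : \sum_(i < m) \sum_(j < n) mu j * X i j = \sum_(j < n) mu j * (q j / T).
  rewrite exchange_big /=; apply: eq_bigr => j _; by rewrite -hcol big_distrr.
have E4 : \sum_(i < m) (eps * \sum_(j < n) Dfun (X i j) (r i * delta kappa eps mu i j)
     - \sum_(j < n) mu j * X i j + r i * phi kappa eps mu i) =
   eps * \sum_(i < m) \sum_(j < n) Dfun (X i j) (r i * delta kappa eps mu i j)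
   - \sum_(i < m) \sum_(j < n) mu j * X i j + \sum_(i < m) r i * phi kappa eps mu i.
  by rewrite big_split sumrB /= big_distrr.
rewrite /objective.
have -> : \sum_(i < m) \sum_(j < n) kappa i j * X i j + \sum_(j < n) beta (c j) (q j)
   + eps * \sum_(i < m) \sum_(j < n) xlog (X i j) (r i) =
   (\sum_(i < m) \sum_(j < n) kappa i j * X i j
    + eps * \sum_(i < m) \sum_(j < n) xlog (X i j) (r i)) + \sum_(j < n) beta (c j) (q j)
  by ring.
rewrite E1 E2 E4 E3 sumrB; ring.
Qed.

Lemma Dfun_self (R : realType) (y : R) : Dfun y y = 0.
Proof.
rewrite /Dfun; case: eqP => [->|hy]; first by rewrite subr0 addr0.
by rewrite divff ?ln1 ?mulr0; [ring| apply/eqP].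
Qed.

Lemma D_feas (R : realType) (m n : nat) (kappa : 'I_m -> 'I_n -> R) (T eps : R)
  (mu : 'I_n -> R) (r : 'I_m -> R) (X : 'I_m -> 'I_n -> R) (q : 'I_n -> R) i j :
  (0 < n)%N -> feasible T r X q ->
  0 <= Dfun (X i j) (r i * delta kappa eps mu i j) /\
  (Dfun (X i j) (r i * delta kappa eps mu i j) = 0 -> X i j = r i * delta kappa eps mu i j).
Proof.
move=> hn [hX [hrow hcol]].
have r0 : 0 <= r i by rewrite -hrow; apply: sumr_ge0 => k _.
have dp := delta_gt0 kappa eps mu i j hn.
apply: Dfun_ge0 => //; first by apply: mulr_ge0 => //; exact: ltW.
move=> /eqP; rewrite mulf_eq0 (gt_eqF dp) orbF => /eqP ri0.
have H0 : \sum_(k < n) X i k = 0 by rewrite hrow ri0.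
exact: (@psumr_eq0P _ _ xpredT (X i) (fun k _ => hX i k) H0 j isT).
Qed.

Lemma transport_opt (R : realType) (m n : nat) (kappa : 'I_m -> 'I_n -> R) (c : 'I_n -> R)
  (T eps : R) (r : 'I_m -> R) (mu : 'I_n -> R) :
  (0 < n)%N -> 0 < eps -> 0 < T -> (forall j, 0 < c j) -> (forall i, 0 <= r i) ->
  compl c T kappa eps r mu ->
  solves_transport kappa c T eps r (fun i j => r i * delta kappa eps mu i j)
     (fun j => T * svec kappa eps r mu j) /\
  (forall X' q', solves_transport kappa c T eps r X' q' ->
     X' = (fun i j => r i * delta kappa eps mu i j)).
Proof.
move=> hn he hT hc hr hcompl.
set X := fun i j => r i * delta kappa eps mu i j.
set q := fun j => T * svec kappa eps r mu j.
have s0 : forall j, 0 <= svec kappa eps r mu j.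
  move=> j; apply: sumr_ge0 => i _; apply: mulr_ge0 => //; exact: ltW (delta_gt0 _ _ _ _ _ hn).
have hmu : forall j, mu j = mu_of T (c j) (q j).
  move=> j; case: hcompl => hM hcp.
  by apply/(compl_iff_muof hT (hc j) (s0 j) (hM j)); exact: hcp.
have hfe : feasible T r X q.
  split; first by move=> i j; apply: mulr_ge0 => //; exact: ltW (delta_gt0 _ _ _ _ _ hn).
  split; first by move=> i; rewrite /X -big_distrr /= sum_delta // mulr1.
  by move=> j; rewrite /q /X /svec; field; rewrite gt_eqF.
have objX : objective kappa c eps r X q =
   \sum_(i < m) r i * phi kappa eps mu i + \sum_(j < n) (beta (c j) (q j) - mu j * (q j / T)).
  rewrite (obj_ident kappa c mu hn he hfe).
  rewrite (eq_bigr (fun _ => 0)); last first.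
    by move=> i _; rewrite big1 // => j _; rewrite /X Dfun_self.
  by rewrite big1_eq mulr0 add0r.
have key : forall X' q', feasible T r X' q' ->
   objective kappa c eps r X q + eps * \sum_(i < m) \sum_(j < n) Dfun (X' i j) (r i * delta kappa eps mu i j)
   <= objective kappa c eps r X' q'.
  move=> X' q' hf'.
  rewrite objX (obj_ident kappa c mu hn he hf').
  have : \sum_(j < n) (beta (c j) (q j) - mu j * (q j / T)) <=
         \sum_(j < n) (beta (c j) (q' j) - mu j * (q' j / T)).
    apply: ler_sum => j _.
    have := beta_conv (q j) (q' j) hT (hc j); rewrite -hmu; lra.
  lra.
have Dnn : forall X' q', feasible T r X' q' ->
   0 <= \sum_(i < m) \sum_(j < n) Dfun (X' i j) (r i * delta kappa eps mu i j).
  move=> X' q' hf'; apply: sumr_ge0 => i _; apply: sumr_ge0 => j _.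
  exact: (proj1 (D_feas kappa eps mu i j hn hf')).
split.
  split => // X' q' hf'.
  have := key X' q' hf'; have := Dnn X' q' hf'.
  move=> h1 h2; have h3 := mulr_ge0 (ltW he) h1; lra.
move=> X' q' [hf' hopt].
have h1 := key X' q' hf'; have h2 := hopt X q hfe.
have h0 := Dnn X' q' hf'.
have hz : \sum_(i < m) \sum_(j < n) Dfun (X' i j) (r i * delta kappa eps mu i j) = 0.
  apply/eqP; rewrite eq_le h0 andbT.
  have h3 : eps * \sum_(i < m) \sum_(j < n) Dfun (X' i j) (r i * delta kappa eps mu i j) <= 0 by lra.
  by rewrite pmulr_rle0 in h3.
apply: funext => i; apply: funext => j.
have hi := @psumr_eq0P _ _ xpredT (fun i => \sum_(j < n) Dfun (X' i j) (r i * delta kappa eps mu i j))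
   (fun k _ => sumr_ge0 _ (fun j _ => proj1 (D_feas kappa eps mu k j hn hf'))) hz i isT.
have hij := @psumr_eq0P _ _ xpredT (fun j => Dfun (X' i j) (r i * delta kappa eps mu i j))
   (fun k _ => proj1 (D_feas kappa eps mu i k hn hf')) hi j isT.
exact: (proj2 (D_feas kappa eps mu i j hn hf') hij).
Qed.

Lemma cvg_sum_ord (R : realType) (Y : Type) (F : set_system Y) (FF : Filter F)
  (k : nat) (f : 'I_k -> Y -> R) (l : 'I_k -> R) :
  (forall j, f j x @[x --> F] --> l j) ->
  (\sum_(j < k) f j x) @[x --> F] --> \sum_(j < k) l j.
Proof.
move=> H.
have : forall s : seq 'I_k, (\sum_(j <- s) f j x) @[x --> F] --> \sum_(j <- s) l j.
  elim=> [|a s IH].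
    rewrite big_nil. under eq_fun do rewrite big_nil. exact: cvg_cst.
  rewrite big_cons. under eq_fun do rewrite big_cons.
  exact: cvgD.
by move=> /(_ (index_enum _)).
Qed.

Lemma cvg_expo (R : realType) (m n : nat) (Y : Type) (F : set_system Y) (FF : Filter F)
  (kappa : 'I_m -> 'I_n -> R) eps (f : Y -> 'I_n -> R) (mu0 : 'I_n -> R) i j :
  (forall k, f y k @[y --> F] --> mu0 k) ->
  expo kappa eps (f y) i j @[y --> F] --> expo kappa eps mu0 i j.
Proof.
move=> H; rewrite /expo.
apply: (continuous_cvg FF (h := expR) (f := fun y => - (kappa i j + f y j) / eps)).
  exact: continuous_expR.
apply: cvgMl; apply: cvgN; apply: cvgD; [exact: cvg_cst | exact: H].
Qed.

Lemma cvg_Zs (R : realType) (m n : nat) (Y : Type) (F : set_system Y) (FF : Filter F)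
  (kappa : 'I_m -> 'I_n -> R) eps (f : Y -> 'I_n -> R) (mu0 : 'I_n -> R) i :
  (forall k, f y k @[y --> F] --> mu0 k) ->
  Zs kappa eps (f y) i @[y --> F] --> Zs kappa eps mu0 i.
Proof. by move=> H; apply: cvg_sum_ord => j; exact: cvg_expo. Qed.

Lemma cvg_phi (R : realType) (m n : nat) (Y : Type) (F : set_system Y) (FF : Filter F)
  (kappa : 'I_m -> 'I_n -> R) eps (f : Y -> 'I_n -> R) (mu0 : 'I_n -> R) i :
  (0 < n)%N ->
  (forall k, f y k @[y --> F] --> mu0 k) ->
  phi kappa eps (f y) i @[y --> F] --> phi kappa eps mu0 i.
Proof.
move=> hn H; rewrite /phi.
apply: cvgMr.
apply: (continuous_cvg FF (h := @ln R) (f := fun y => Zs kappa eps (f y) i)).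
  by apply: continuous_ln; exact: Zs_gt0.
exact: cvg_Zs.
Qed.

Lemma cvg_delta (R : realType) (m n : nat) (Y : Type) (F : set_system Y) (FF : Filter F)
  (kappa : 'I_m -> 'I_n -> R) eps (f : Y -> 'I_n -> R) (mu0 : 'I_n -> R) i j :
  (0 < n)%N ->
  (forall k, f y k @[y --> F] --> mu0 k) ->
  delta kappa eps (f y) i j @[y --> F] --> delta kappa eps mu0 i j.
Proof.
move=> hn H; rewrite /delta.
apply: cvgM; first exact: cvg_expo.
apply: cvgV; first by rewrite gt_eqF // Zs_gt0.
exact: cvg_Zs.
Qed.

Module EVTBox.
Import ArrowAsProduct.

Lemma evt_box (R : realType) (n : nat) (b : 'I_n -> R) (G : ('I_n -> R) -> R) :
  (forall j, 0 <= b j) ->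
  (forall f, (forall j, 0 <= f j <= b j) ->
     forall (Y : Type) (F : set_system Y), Filter F ->
     forall phi : Y -> 'I_n -> R, (forall k, phi y k @[y --> F] --> f k) ->
     G (phi y) @[y --> F] --> G f) ->
  exists2 mus, (forall j, 0 <= mus j <= b j) &
     forall t, (forall j, 0 <= t j <= b j) -> G t <= G mus.
Proof.
move=> hb HC.
set K := [set f : 'I_n -> R | forall i, `[0, b i] (f i)].
have cK : compact K.
  have := (@tychonoff _ (fun _ : 'I_n => R) (fun i => `[0, b i]) (fun i => @segment_compact R _ _)).
  move=> H; exact H.
have K0 : K !=set0.
  by exists (fun _ => 0) => i /=; rewrite in_itv /= lexx hb.
have cG : {within K, continuous G}.
  apply: continuous_in_subspaceT => f fK.
  have fK' : forall j, 0 <= f j <= b j.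
    by move=> j; move: fK; rewrite inE => /(_ j); rewrite /= in_itv.
  have := HC f fK' _ (nbhs f) _ id.
  apply => k.
  exact: (@proj_continuous 'I_n (fun _ => R) k f).
have [mus musK Hm] := compact_EVT_max K0 cK cG.
exists mus.
  by move=> j; move: musK; rewrite inE => /(_ j); rewrite /= in_itv.
move=> t ht; apply: Hm; rewrite inE => j /=; rewrite in_itv /=; exact: ht.
Qed.

End EVTBox.

Definition Gf (R : realType) (m n : nat) (g : 'I_m -> R -> R) (c : 'I_n -> R) (T : R)
  (kappa : 'I_m -> 'I_n -> R) (eps : R) (mu : 'I_n -> R) : R :=
  \sum_(i < m) g i (phi kappa eps mu i) + \sum_(j < n) c j * ln (1 - mu j / T).

Lemma G_tangent (R : realType) (m n : nat) (rf g : 'I_m -> R -> R) (c : 'I_n -> R) (T : R)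
  (kappa : 'I_m -> 'I_n -> R) (eps : R) (mu nu : 'I_n -> R) :
  (0 < n)%N -> 0 < eps -> 0 < T -> (forall j, 0 < c j) -> (forall i t, 0 <= rf i t) ->
  (forall i t t', rf i t' * (t' - t) <= g i t' - g i t <= rf i t * (t' - t)) ->
  in_Mbox T mu -> in_Mbox T nu ->
  Gf g c T kappa eps mu <= Gf g c T kappa eps nu +
    \sum_(j < n) (mu j - nu j) * (svec kappa eps (fun i => rf i (phi kappa eps nu i)) nu j - c j / (T - nu j)).
Proof.
move=> hn he hT hc hrf0 hsand hmu hnu.
have HW := @W_tangent R m n (fun _ _ => 0) c T kappa eps (fun i => rf i (phi kappa eps nu i)) mu nu
  hn he hT hc (fun i => hrf0 _ _) hmu hnu.
have H1 : \sum_(i < m) g i (phi kappa eps mu i) - \sum_(i < m) g i (phi kappa eps nu i) <=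
  \sum_(i < m) (rf i (phi kappa eps nu i) * phi kappa eps mu i - 0)
  - \sum_(i < m) (rf i (phi kappa eps nu i) * phi kappa eps nu i - 0).
  rewrite -!sumrB; apply: ler_sum => i _.
  have /andP [_ h] := hsand i (phi kappa eps nu i) (phi kappa eps mu i); lra.
move: HW; rewrite /W /Gf; lra.
Qed.

Lemma phi_le (R : realType) (m n : nat) (kappa : 'I_m -> 'I_n -> R) eps mu i j :
  (0 < n)%N -> 0 < eps -> phi kappa eps mu i <= kappa i j + mu j.
Proof.
move=> hn he.
have h1 : expo kappa eps mu i j <= Zs kappa eps mu i.
  rewrite /Zs (bigD1 j) //=.
  have : 0 <= \sum_(k < n | k != j) expo kappa eps mu i k.
    by apply: sumr_ge0 => k _; exact: ltW (expo_gt0 _ _ _ _ _).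
  lra.
have h2 : ln (expo kappa eps mu i j) <= ln (Zs kappa eps mu i).
  by rewrite ler_ln ?posrE ?expo_gt0 ?Zs_gt0.
rewrite /expo expRK in h2.
have h3 := ler_wpM2l (ltW he) h2.
have e : eps * (- (kappa i j + mu j) / eps) = - (kappa i j + mu j) by field; rewrite gt_eqF.
rewrite e in h3; rewrite /phi -/(Zs kappa eps mu i); lra.
Qed.

Lemma near0_pos (R : realType) (P : R -> Prop) (a : R) :
  0 < a -> (\forall h \near (0:R), P h) -> exists h, 0 < h < a /\ P h.
Proof.
move=> a0 /nbhs_normP [e e0 He].
exists (Num.min e a / 2).
have hm : 0 < Num.min e a by rewrite lt_min e0 a0.
have hma : Num.min e a <= a by rewrite ge_min lexx orbT.
have hme : Num.min e a <= e by rewrite ge_min lexx.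
split; first by apply/andP; split; lra.
apply: He => /=; rewrite sub0r normrN ger0_norm; lra.
Qed.

Lemma near0_neg (R : realType) (P : R -> Prop) (a : R) :
  0 < a -> (\forall h \near (0:R), P h) -> exists h, - a < h < 0 /\ P h.
Proof.
move=> a0 /nbhs_normP [e e0 He].
exists (- (Num.min e a / 2)).
have hm : 0 < Num.min e a by rewrite lt_min e0 a0.
have hma : Num.min e a <= a by rewrite ge_min lexx orbT.
have hme : Num.min e a <= e by rewrite ge_min lexx.
split; first by apply/andP; split; lra.
apply: He => /=; rewrite sub0r opprK ger0_norm; lra.
Qed.

Lemma exist_compl (R : realType) (m n : nat) (rf g : 'I_m -> R -> R) (c : 'I_n -> R) (T : R)
  (kappa : 'I_m -> 'I_n -> R) (eps : R) :
  (0 < n)%N -> 0 < eps -> 0 < T -> (forall j, 0 < c j) -> (forall i t, 0 <= rf i t) ->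
  (forall i, continuous (rf i)) -> (forall i, continuous (g i)) ->
  (forall i t t', rf i t' * (t' - t) <= g i t' - g i t <= rf i t * (t' - t)) ->
  exists mu, compl c T kappa eps (fun i => rf i (phi kappa eps mu i)) mu.
Proof.
move=> hn he hT hc hrf0 hrfc hgc hsand.
pose j0 : 'I_n := Ordinal hn.
pose G := Gf g c T kappa eps.
pose M := \sum_(i < m) g i (kappa i j0 + T).
have gmono : forall i t t', t <= t' -> g i t <= g i t'.
  move=> i t t' htt; have /andP [h _] := hsand i t t'.
  have h2 : 0 <= rf i t' * (t' - t) by apply: mulr_ge0 => //; rewrite subr_ge0.
  lra.
have HM : forall mu, in_Mbox T mu -> forall j, G mu <= M + c j * ln (1 - mu j / T).
  move=> mu hmu j; rewrite /G /Gf.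
  have h1 : \sum_(i < m) g i (phi kappa eps mu i) <= M.
    apply: ler_sum => i _; apply: gmono.
    have := phi_le kappa mu i j0 hn he; have /andP [_ h] := hmu j0; lra.
  have h2 : \sum_(k < n) c k * ln (1 - mu k / T) <= c j * ln (1 - mu j / T).
    rewrite (bigD1 j) //=.
    have : \sum_(k < n | k != j) c k * ln (1 - mu k / T) <= 0.
      apply: sumr_le0 => k _; apply: mulr_ge0_le0; first exact: ltW.
      apply: ln_le0; have /andP [h _] := hmu k.
      have : 0 <= mu k / T by apply: divr_ge0 => //; exact: ltW.
      lra.
    lra.
  lra.
have M0 : in_Mbox T (fun _ : 'I_n => 0) by move=> j /=; rewrite lexx hT.
set G0 := G (fun _ => 0).
have G0M : G0 <= M.
  by have := HM _ M0 j0; rewrite /= mul0r subr0 ln1 mulr0 addr0.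
pose a := fun j => (G0 - M) / c j.
have ha : forall j, a j <= 0.
  by move=> j; rewrite /a ler_pdivrMr // mul0r; lra.
pose b := fun j => T - T * expR (a j) / 2.
have hb : forall j, 0 <= b j /\ b j < T.
  move=> j; have e1 := expR_gt0 (a j).
  have e2 : expR (a j) <= 1 by rewrite expR_le1.
  have p1 : 0 < T * expR (a j) by apply: mulr_gt0.
  have p2 : T * expR (a j) <= T by rewrite -[X in _ <= X]mulr1 ler_wpM2l // ltW.
  rewrite /b; split; lra.
have Hout : forall mu, in_Mbox T mu -> forall j, b j < mu j -> G mu < G0.
  move=> mu hmu j hbj.
  have /andP [_ muT] := hmu j.
  have y0 := one_subdiv_gt0 hT muT.
  have hy : 1 - mu j / T < expR (a j).
    have h1 : b j / T < mu j / T by rewrite ltr_pM2r // invr_gt0.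
    have e : 1 - b j / T = expR (a j) / 2 by rewrite /b; field; rewrite gt_eqF.
    have := expR_gt0 (a j); lra.
  have hl : ln (1 - mu j / T) < a j.
    by rewrite -[X in _ < X](expRK (a j)) ltr_ln ?posrE ?expR_gt0.
  have h3 : c j * ln (1 - mu j / T) < c j * a j by rewrite ltr_pM2l.
  have e : c j * a j = G0 - M by rewrite /a; field; rewrite gt_eqF.
  have := HM mu hmu j; lra.
have HC : forall f, (forall j, 0 <= f j <= b j) ->
     forall (Y : Type) (F : set_system Y), Filter F ->
     forall ph : Y -> 'I_n -> R, (forall k, ph y k @[y --> F] --> f k) ->
     G (ph y) @[y --> F] --> G f.
  move=> f hf Y F FF ph Hph; rewrite /G /Gf.
  apply: cvgD.
    apply: cvg_sum_ord => i.
    apply: (continuous_cvg FF (h := g i) (f := fun y => phi kappa eps (ph y) i)).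
      exact: hgc.
    exact: cvg_phi.
  apply: cvg_sum_ord => k; apply: cvgMr.
  apply: (continuous_cvg FF (h := @ln R) (f := fun y => 1 - ph y k / T)).
    apply: continuous_ln; apply: one_subdiv_gt0 => //.
    have /andP [_ h] := hf k; have := (hb k).2; lra.
  apply: cvgD; first exact: cvg_cst.
  apply: cvgN; apply: cvgMl; exact: Hph.
have [mus musK Hmax] := EVTBox.evt_box (fun j => proj1 (hb j)) HC.
have musM : in_Mbox T mus.
  move=> j; have /andP [h1 h2] := musK j; have := (hb j).2.
  move=> h3; apply/andP; split; lra.
have Hglob : forall mu, in_Mbox T mu -> G mu <= G mus.
  move=> mu hmu.
  case: (pselect (exists j, b j < mu j)) => [[j hj]|H2].
    have := Hout mu hmu j hj.
    have := Hmax (fun _ => 0) (fun j => introT andP (conj (lexx 0) (proj1 (hb j)))).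
    rewrite -/G0; lra.
  apply: Hmax => j; have /andP [h1 _] := hmu j; rewrite h1 /=.
  rewrite leNgt; apply/negP => hlt; apply: H2; exists j; exact: hlt.
exists mus; split => // j.
pose nu := fun h : R => fun k : 'I_n => if k == j then mus k + h else mus k.
pose S := fun h => svec kappa eps (fun i => rf i (phi kappa eps (nu h) i)) (nu h) j - c j / (T - nu h j).
have nu0 : nu 0 = mus.
  by apply: funext => k; rewrite /nu; case: eqP => // ->; rewrite addr0.
have nuM : forall h, 0 <= mus j + h < T -> in_Mbox T (nu h).
  move=> h hh k; rewrite /nu; case: eqP => [->|_] //; exact: musM.
have key : forall h, 0 <= mus j + h < T -> h * S h <= 0.
  move=> h hh.
  have H1 := @G_tangent R m n rf g c T kappa eps mus (nu h) hn he hT hc hrf0 hsand musM (nuM h hh).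
  have H2 := Hglob (nu h) (nuM h hh).
  have Hsum : \sum_(k < n) (mus k - nu h k) *
      (svec kappa eps (fun i => rf i (phi kappa eps (nu h) i)) (nu h) k - c k / (T - nu h k))
      = - h * S h.
    rewrite (bigD1 j) //= big1 ?addr0.
      by rewrite /S /nu eqxx; ring.
    by move=> k hk; rewrite /nu (negbTE hk) subrr mul0r.
  rewrite Hsum in H1; rewrite /G in H2; lra.
have S0 : S 0 = svec kappa eps (fun i => rf i (phi kappa eps mus i)) mus j - c j / (T - mus j).
  by rewrite /S nu0.
have Hnu : forall k, nu h k @[h --> (0:R)] --> mus k.
  move=> k; rewrite /nu; case: eqP => _; last exact: cvg_cst.
  rewrite -[X in _ --> X]addr0; apply: cvgD; [exact: cvg_cst | exact: cvg_id].
have Scont : S h @[h --> (0:R)] --> S 0.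
  rewrite S0 /S.
  apply: cvgD.
    apply: cvg_sum_ord => i; apply: cvgM.
      apply: (continuous_cvg _ (h := rf i) (f := fun h => phi kappa eps (nu h) i)).
        exact: hrfc.
      exact: cvg_phi.
    exact: cvg_delta.
  apply: cvgN; apply: cvgMr; apply: cvgV.
    by rewrite subr_eq0 gt_eqF //; have /andP [_ h] := musM j.
  apply: cvgD; first exact: cvg_cst.
  apply: cvgN; exact: Hnu.
have hmj := musM j; move/andP: hmj => [mj0 mjT].
have hle : S 0 <= 0.
  rewrite leNgt; apply/negP => hgt.
  have Hn : \forall h \near (0:R), 0 < S h by apply: (cvgr_gt (S 0) Scont).
  have [h [/andP [h0 hT'] hSh]] := near0_pos (a := T - mus j) (P := fun h => 0 < S h) ltac:(lra) Hn.
  have := key h ltac:(apply/andP; split; lra).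
  have := mulr_gt0 h0 hSh; lra.
split; first by move: hle; rewrite S0; lra.
move=> hpos.
have hge : 0 <= S 0.
  rewrite leNgt; apply/negP => hlt.
  have Hn : \forall h \near (0:R), S h < 0 by apply: (cvgr_lt (S 0) Scont).
  have [h [/andP [h0 hT'] hSh]] := near0_neg (a := mus j) (P := fun h => S h < 0) hpos Hn.
  have := key h ltac:(apply/andP; split; lra).
  have : 0 < h * S h by rewrite nmulr_rgt0.
  lra.
rewrite S0 in hle hge; lra.
Qed.

Lemma rho_box (R : realType) (m n : nat) (p : 'I_m -> R -> R) (rbar : 'I_m -> R)
  (kappa : 'I_m -> 'I_n -> R) (eps : R) (mu : 'I_n -> R) :
  (forall i x, 0 <= p i x <= 1) -> (forall i, 0 < rbar i) ->
  in_Rbox rbar (rho p rbar kappa eps mu).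
Proof.
move=> hp01 hrbar i; rewrite /rho.
have /andP [a b] := hp01 i (phi kappa eps mu i); have := hrbar i => h.
apply/andP; split; first by apply: mulr_ge0 => //; exact: ltW.
by rewrite -[X in _ <= X]mulr1 ler_wpM2l // ltW.
Qed.

Lemma svec_ge0 (R : realType) (m n : nat) (kappa : 'I_m -> 'I_n -> R) eps r mu j :
  (0 < n)%N -> (forall i, 0 <= r i) -> 0 <= svec kappa eps r mu j.
Proof.
move=> hn hr; apply: sumr_ge0 => i _; apply: mulr_ge0 => //.
exact: ltW (delta_gt0 _ _ _ _ _ hn).
Qed.

Lemma equil_iff_compl (R : realType) (m n : nat) (p : 'I_m -> R -> R) (c : 'I_n -> R)
  (T eps : R) (kappa : 'I_m -> 'I_n -> R) (rbar : 'I_m -> R)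
  (X : 'I_m -> 'I_n -> R) (q mu : 'I_n -> R) (r : 'I_m -> R) :
  (0 < n)%N -> 0 < T -> (forall j, 0 < c j) ->
  (forall i x, 0 <= p i x <= 1) -> (forall i, 0 < rbar i) ->
  equilibrium p c T eps kappa rbar X q mu r <->
  (compl c T kappa eps r mu /\ r = rho p rbar kappa eps mu /\
   X = (fun i j => r i * delta kappa eps mu i j) /\
   q = (fun j => T * svec kappa eps r mu j)).
Proof.
move=> hn hT hc hp01 hrbar.
have hT' : T != 0 by rewrite gt_eqF.
split.
  move=> [hmu [hr [hX hsum]]].
  have er : r = rho p rbar kappa eps mu by apply: funext => i; rewrite hr.
  have r0 : forall i, 0 <= r i.
    by move=> i; rewrite er; have /andP [] := rho_box kappa eps mu hp01 hrbar i.
  have eX : X = (fun i j => r i * delta kappa eps mu i j).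
    by apply: funext => i; apply: funext => j; rewrite hX.
  have eq : q = (fun j => T * svec kappa eps r mu j).
    apply: funext => j; rewrite /svec -(eq_bigr _ (fun i _ => hX i j)) hsum.
    by rewrite mulrC mulfVK.
  have hM : in_Mbox T mu by move=> j; rewrite hmu; exact: muof_range.
  split => //; split => //.
  move=> j; apply/(compl_iff_muof hT (hc j) (svec_ge0 kappa eps mu j hn r0) (hM j)).
  by rewrite hmu eq.
move=> [[hM hcp] [er [eX eq]]].
have r0 : forall i, 0 <= r i.
  by move=> i; rewrite er; have /andP [] := rho_box kappa eps mu hp01 hrbar i.
split.
  move=> j; rewrite eq; apply/(compl_iff_muof hT (hc j) (svec_ge0 kappa eps mu j hn r0) (hM j)).
  exact: hcp.
split; first by move=> i; rewrite er.
split; first by move=> i j; rewrite eX.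
by move=> j; rewrite eX eq /svec mulrC mulKf.
Qed.

Lemma sand_cont (R : realType) (rf g : R -> R) :
  continuous rf -> (forall t t', rf t' * (t' - t) <= g t' - g t <= rf t * (t' - t)) ->
  continuous g.
Proof.
move=> hrf hs t.
have H1 : rf x * (x - t) @[x --> t] --> 0.
  have : rf x * (x - t) @[x --> t] --> rf t * (t - t).
    apply: cvgM; first exact: hrf.
    apply: cvgD; [exact: cvg_id| exact: cvg_cst].
  by rewrite subrr mulr0.
have H2 : rf t * (x - t) @[x --> t] --> 0.
  have : rf t * (x - t) @[x --> t] --> rf t * (t - t).
    apply: cvgMr; apply: cvgD; [exact: cvg_id| exact: cvg_cst].
  by rewrite subrr mulr0.
have H : (g x - g t) @[x --> t] --> 0.
  apply: (squeeze_cvgr (f := fun x => rf x * (x - t)) (h := fun x => rf t * (x - t))) => //.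
  by apply: nearW => x; exact: hs.
have H3 : ((fun x0 : R => g x0 - g t) + (fun=> g t)) x @[x --> t] --> 0 + g t.
  by apply: cvgD => //; exact: cvg_cst.
rewrite add0r in H3.
have e : forall x, ((fun x0 : R => g x0 - g t) + (fun=> g t)) x = g x.
  by move=> x; rewrite !fctE subrK.
by move: H3; rewrite (eq_cvg _ _ e).
Qed.

Lemma gb_sand (R : realType) (m : nat) (p U : 'I_m -> R -> R) (rbar : 'I_m -> R) :
  (forall i x, 0 <= p i x <= 1) -> (forall i, 0 < rbar i) ->
  (forall i tau r, 0 <= r <= rbar i ->
     U i r - tau * r <= U i (rbar i * p i tau) - tau * (rbar i * p i tau)) ->
  forall i t t', rbar i * p i t' * (t' - t) <=
     (rbar i * p i t' * t' - U i (rbar i * p i t')) - (rbar i * p i t * t - U i (rbar i * p i t))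
     <= rbar i * p i t * (t' - t).
Proof.
move=> hp01 hrbar hUmax i t t'.
have hb : forall x, 0 <= rbar i * p i x <= rbar i.
  move=> x; have /andP [a b] := hp01 i x; have := hrbar i => h.
  apply/andP; split; first by apply: mulr_ge0 => //; exact: ltW.
  by rewrite -[X in _ <= X]mulr1 ler_wpM2l // ltW.
have h1 := hUmax i t' _ (hb t).
have h2 := hUmax i t _ (hb t').
apply/andP; split; lra.
Qed.

Lemma exist_rho (R : realType) (m n : nat) (p U : 'I_m -> R -> R) (rbar : 'I_m -> R)
  (c : 'I_n -> R) (T eps : R) (kappa : 'I_m -> 'I_n -> R) :
  (0 < n)%N -> 0 < eps -> 0 < T -> (forall j, 0 < c j) ->
  (forall i x, 0 <= p i x <= 1) -> (forall i, 0 < rbar i) -> (forall i, continuous (p i)) ->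
  (forall i tau r, 0 <= r <= rbar i ->
     U i r - tau * r <= U i (rbar i * p i tau) - tau * (rbar i * p i tau)) ->
  exists mu, compl c T kappa eps (rho p rbar kappa eps mu) mu.
Proof.
move=> hn he hT hc hp01 hrbar hpc hUmax.
have hrf0 : forall i t, 0 <= rbar i * p i t.
  by move=> i t; have /andP [a _] := hp01 i t; apply: mulr_ge0 => //; exact: ltW.
have hrfc : forall i, continuous (fun t => rbar i * p i t).
  by move=> i t; apply: cvgMr; exact: hpc.
have hs := gb_sand hp01 hrbar hUmax.
have hgc : forall i, continuous (fun t => rbar i * p i t * t - U i (rbar i * p i t)).
  by move=> i; apply: (sand_cont (hrfc i)) => t t'; exact: hs.
exact: (@exist_compl R m n (fun i t => rbar i * p i t)
   (fun i t => rbar i * p i t * t - U i (rbar i * p i t)) c T kappa eps hn he hT hc hrf0 hrfc hgc hs).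
Qed.

Lemma exist_fixed_r (R : realType) (m n : nat) (r : 'I_m -> R)
  (c : 'I_n -> R) (T eps : R) (kappa : 'I_m -> 'I_n -> R) :
  (0 < n)%N -> 0 < eps -> 0 < T -> (forall j, 0 < c j) -> (forall i, 0 <= r i) ->
  exists mu, compl c T kappa eps r mu.
Proof.
move=> hn he hT hc hr.
have hgc : forall i, continuous (fun t : R => r i * t).
  by move=> i t; apply: cvgMr; exact: cvg_id.
have hrfc : forall i, continuous (fun _ : R => r i).
  by move=> i t; exact: cvg_cst.
have hs : forall i t t', r i * (t' - t) <= r i * t' - r i * t <= r i * (t' - t).
  by move=> i t t'; apply/andP; split; lra.
exact: (@exist_compl R m n (fun i _ => r i) (fun i t => r i * t) c T kappa eps hn he hT hc
  (fun i _ => hr i) hrfc hgc hs).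
Qed.
Unset Implicit Arguments.

Theorem theorem3 (R : realType) (m n : nat)
  (c : 'I_n -> R) (T eps : R) (kappa : 'I_m -> 'I_n -> R) (rbar : 'I_m -> R)
  (p : 'I_m -> R -> R) (U : 'I_m -> R -> R)
  (hn : (1 <= n)%N) (hm : (1 <= m)%N)
  (hc : forall j, 0 < c j) (hT : 0 < T) (heps : 0 < eps)
  (hkappa : forall i j, 0 <= kappa i j) (hrbar : forall i, 0 < rbar i)
  (hp01 : forall i x, 0 <= p i x <= 1)
  (hpcont : forall i, continuous (p i))
  (hpmono : forall i x y, x <= y -> p i y <= p i x)
  (hp1 : forall i x, x <= 0 -> p i x = 1)
  (hplim : forall i, p i x @[x --> +oo] --> 0)
  (hUcont : forall i, {within [set x | 0 <= x <= rbar i], continuous (U i)})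
  (hUmono : forall i x y, 0 <= x -> x <= y -> y <= rbar i -> U i x <= U i y)
  (hUconc : forall i x y t, 0 <= x <= rbar i -> 0 <= y <= rbar i -> x != y ->
     0 < t < 1 -> t * U i x + (1 - t) * U i y < U i (t * x + (1 - t) * y))
  (hUmax : forall i tau r, 0 <= r <= rbar i ->
     U i r - tau * r <= U i (rbar i * p i tau) - tau * (rbar i * p i tau)) :
  (forall (X : 'I_m -> 'I_n -> R) (q mu : 'I_n -> R) (r : 'I_m -> R),
     (saddle U c T kappa eps rbar r mu /\ solves_transport kappa c T eps r X q)
     <-> equilibrium p c T eps kappa rbar X q mu r) /\
  (exists (X : 'I_m -> 'I_n -> R) (q mu : 'I_n -> R) (r : 'I_m -> R),
     equilibrium p c T eps kappa rbar X q mu r /\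
     forall (X' : 'I_m -> 'I_n -> R) (q' mu' : 'I_n -> R) (r' : 'I_m -> R),
       equilibrium p c T eps kappa rbar X' q' mu' r' ->
       X' = X /\ q' = q /\ mu' = mu /\ r' = r).
Proof.
have hn' : (0 < n)%N := hn.
have rho0 : forall mu i, 0 <= rho p rbar kappa eps mu i.
  by move=> mu i; have /andP [] := @rho_box R m n p rbar kappa eps mu hp01 hrbar i.
split.
  move=> X q mu r; split.
    move=> [[hrR [hmuM [hmax hmin]]] [hfeas hopt]].
    have r0 : forall i, 0 <= r i by move=> i; case/andP: (hrR i).
    have er : r = rho p rbar kappa eps mu.
      apply: (@r_unique R m n U c T kappa eps rbar p r mu hp01 hrbar hUconc hUmax hrR).
      exact: hmin _ (@rho_box R m n p rbar kappa eps mu hp01 hrbar).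
    have [mu0 hc0] := @exist_fixed_r R m n r c T eps kappa hn heps hT hc r0.
    have emu : mu = mu0.
      apply: funext => j; apply/eqP; apply: contraT => hne.
      have [_ hlt] := @compl_max R m n U c T kappa eps r mu mu0 hn heps hT hc r0 hc0 hmuM.
      have := hlt j hne; have := hmax mu0 (proj1 hc0); lra.
    rewrite -emu in hc0.
    have [_ huniq] := @transport_opt R m n kappa c T eps r mu hn heps hT hc r0 hc0.
    have eX := huniq X q (conj hfeas hopt).
    have eq : q = (fun j => T * svec kappa eps r mu j).
      apply: funext => j; have := (proj2 (proj2 hfeas) j); rewrite eX => hs.
      by rewrite /svec hs; field; rewrite gt_eqF.
    by apply/(@equil_iff_compl R m n p c T eps kappa rbar X q mu r hn hT hc hp01 hrbar).
  move=> heq.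
  have [hcm [er [eX eq]]] :=
    (@equil_iff_compl R m n p c T eps kappa rbar X q mu r hn hT hc hp01 hrbar).1 heq.
  have r0 : forall i, 0 <= r i by move=> i; rewrite er; exact: rho0.
  split.
    split; first by rewrite er; exact: (@rho_box R m n p rbar kappa eps mu hp01 hrbar).
    split; first exact: (proj1 hcm).
    split.
      by move=> mu' hmu'; exact: (proj1 (@compl_max R m n U c T kappa eps r mu' mu hn heps hT hc r0 hcm hmu')).
    move=> r' hr'; rewrite er.
    exact: (@rmin R m n U c T kappa eps rbar p r' mu hUmax hr').
  have [ht _] := @transport_opt R m n kappa c T eps r mu hn heps hT hc r0 hcm.
  by rewrite eX eq.
have [mu hcm] := @exist_rho R m n p U rbar c T eps kappa hn heps hT hc hp01 hrbar hpcont hUmax.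
set r := rho p rbar kappa eps mu.
exists (fun i j => r i * delta kappa eps mu i j), (fun j => T * svec kappa eps r mu j), mu, r.
split.
  by apply/(@equil_iff_compl R m n p c T eps kappa rbar _ _ mu r hn hT hc hp01 hrbar).
move=> X' q' mu' r' heq'.
have [hcm' [er' [eX' eq']]] :=
  (@equil_iff_compl R m n p c T eps kappa rbar X' q' mu' r' hn hT hc hp01 hrbar).1 heq'.
have r0 : forall i, 0 <= r i by move=> i; exact: rho0.
have r0' : forall i, 0 <= r' i by move=> i; rewrite er'; exact: rho0.
have emu : mu' = mu.
  apply: funext => j; apply/eqP; apply: contraT => hne.
  have h1 := (proj2 (@compl_max R m n U c T kappa eps r mu' mu hn heps hT hc r0 hcm (proj1 hcm'))) j hne.
  have h2 := @rmin R m n U c T kappa eps rbar p r' mu hUmax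
     (ltac:(rewrite er'; exact: (@rho_box R m n p rbar kappa eps mu' hp01 hrbar))).
  have h3 := proj1 (@compl_max R m n U c T kappa eps r' mu mu' hn heps hT hc r0' hcm' (proj1 hcm)).
  have h4 := @rmin R m n U c T kappa eps rbar p r mu' hUmax
     (@rho_box R m n p rbar kappa eps mu hp01 hrbar).
  rewrite -er' in h4.
  rewrite -/r in h2.
  lra.
have er'' : r' = r by rewrite er' emu.
split; first by rewrite eX' er'' emu.
split; first by rewrite eq' er'' emu.
by split.
Qed.
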